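(* Let $m,k$ be positive integers with $\gcd(k,m)=1$, $m$ odd and $m>k+2$. For $z\in\mathbb{F}_{2^k}$ define $f^{(z)}:\mathbb{F}_{2^m}\times\mathbb{F}_{2^m}\to\mathbb{F}_2$ by $f^{(z)}(x_1,x_2)={\rm Tr}_1^m(x_1x_2^{2^k+1})$ if ${\rm Tr}_1^k(z)=0$ and $f^{(z)}(x_1,x_2)={\rm Tr}_1^m(x_2x_1^{2^k+1})$ if ${\rm Tr}_1^k(z)=1$. Then $f:\mathbb{F}_{2^m}\times\mathbb{F}_{2^m}\times\mathbb{F}_{2^k}\times\mathbb{F}_{2^k}\to\mathbb{F}_2$, $f(x_1,x_2,y,z)=f^{(z)}(x_1,x_2)+{\rm Tr}_1^k(yz)$, is a GMM function that is not in the class $MM^{\#}$.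
   Context: ${\rm Tr}_a^b$ denotes the trace from $\mathbb{F}_{2^b}$ to $\mathbb{F}_{2^a}$. A GMM (generalized Maiorana–McFarland) function is one of the form $f(x,y,z)=f^{(z)}(x)+{\rm Tr}_1^k(yz)$ on $W\times\mathbb{F}_{2^k}\times\mathbb{F}_{2^k}$ with every $f^{(z)}$ bent on $W$. Two Boolean functions $f,g$ on an $\mathbb{F}_2$-space $X$ are EA-equivalent if $g(x)=f(L(x)+a)+\langle c,x\rangle+b$ with $L$ a linear permutation of $X$, $a,c\in X$, $b\in\mathbb{F}_2$. The Maiorana–McFarland class on $\mathbb{F}_{2^N}\times\mathbb{F}_{2^N}$ consists of functions ${\rm Tr}_1^N(x\pi(y))+g(y)$ with $\pi$ a permutation of $\mathbb{F}_{2^N}$ and $g$ arbitrary; $MM^{\#}$ is the set of Boolean functions on a $2N$-dimensional $\mathbb{F}_2$-space EA-equivalent (after a linear identification with $\mathbb{F}_{2^N}^2$) to such a function. *)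

(* Defs.v *)
From HB Require Import structures.
From mathcomp Require Import all_boot all_order all_algebra all_field.
Set Implicit Arguments. Unset Strict Implicit. Unset Printing Implicit Defensive.
Import Order.TTheory GRing.Theory Num.Theory.
Local Open Scope ring_scope.

(* Boolean functions take values in bool; addition in F_2 is xor (+). *)

(* Absolute trace Tr_1^n : F_{2^n} -> F_2, as an element of F
   (F is a field of order 2^n, so Tr_1^n x lies in the prime field). *)
Definition trace (F : finFieldType) (n : nat) (x : F) : F :=
  \sum_(i < n) x ^+ (2 ^ i).

(* The same trace, read as an element of F_2 = bool (Tr x = 1 <-> true). *)
Definition trb (F : finFieldType) (n : nat) (x : F) : bool := trace n x != 0.

Definition sgnb (b : bool) : int := (-1) ^+ b.

Definition walsh2 (F : finFieldType) (m : nat) (g : F * F -> bool) (a : F * F) : int :=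
  \sum_(x : F * F) sgnb (g x (+) trb m (a.1 * x.1) (+) trb m (a.2 * x.2)).

Definition bent2 (F : finFieldType) (m : nat) (g : F * F -> bool) : Prop :=
  forall a : F * F, (walsh2 m g a) ^+ 2 = (2 ^ (2 * m))%:Z.

Definition isGMM (F K : finFieldType) (m k : nat) (f : (F * F) * K * K -> bool) : Prop :=
  exists fam : K -> (F * F -> bool),
    (forall z, bent2 m (fam z)) /\
    (forall (x : F * F) (y z : K), f (x, y, z) = fam z x (+) trb k (y * z)).

(* F_2-linear maps between F_2-spaces of characteristic 2 = additive maps. *)
Definition additive_map (U V : zmodType) (phi : U -> V) : Prop :=
  forall u v, phi (u + v) = phi u + phi v.

Definition MMfun (E : finFieldType) (N : nat) (pi : E -> E) (g : E -> bool)
  (u : E * E) : bool := trb N (u.1 * pi u.2) (+) g u.2.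

(* MM^# : h on the F_2-space V belongs to MM^# (relative to the field E of
   order 2^N) if, after an F_2-linear identification psi : F_{2^N}^2 -> V,
   it is EA-equivalent to an MM function:
     MM(u) = h'(L u + a) + <c,u> + b,  h' = h o psi. *)
Definition MMsharp (V : zmodType) (E : finFieldType) (N : nat) (h : V -> bool) : Prop :=
  exists (psi : E * E -> V) (L : E * E -> E * E) (a c : E * E) (b : bool)
         (pi : E -> E) (g : E -> bool),
    [/\ additive_map psi /\ bijective psi, additive_map L /\ bijective L,
        bijective pi &
        forall u : E * E,
          MMfun N pi g u =
          h (psi (L u + a)) (+) (trb N (c.1 * u.1) (+) trb N (c.2 * u.2)) (+) b].

Definition fz (F K : finFieldType) (m k : nat) (z : K) (x : F * F) : bool :=
  if trb k z then trb m (x.2 * x.1 ^+ (2 ^ k + 1))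
  else trb m (x.1 * x.2 ^+ (2 ^ k + 1)).

Definition fcor (F K : finFieldType) (m k : nat) (v : (F * F) * K * K) : bool :=
  let: (x, y, z) := v in fz m k z x (+) trb k (y * z).

(* Main.v *)
Require Import Defs.
From HB Require Import structures.
From mathcomp Require Import all_boot all_order all_algebra all_field.
From mathcomp Require Import ring zify.
Set Implicit Arguments. Unset Strict Implicit. Unset Printing Implicit Defensive.
Import Order.TTheory GRing.Theory Num.Theory.
Local Open Scope ring_scope.

Lemma char2 (F : finFieldType) n : (0 < n)%N -> #|F| = (2 ^ n)%N -> (2 : F) = 0.
Proof.
move=> hn hF.
have h := expf_card (-1 : F).
rewrite hF -(prednK hn) expnS exprM sqrrN expr1n expr1n in h.
have : (1 : F) + 1 = 0 by rewrite {2}h subrr.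
done.
Qed.

Lemma addxx (F : finFieldType) n : (0 < n)%N -> #|F| = (2 ^ n)%N -> forall x : F, x + x = 0.
Proof. move=> hn hF x. by rewrite -mulr2n -mulr_natl (char2 hn hF) mul0r. Qed.

Lemma oppc2 (F : finFieldType) n : (0 < n)%N -> #|F| = (2 ^ n)%N -> forall x : F, - x = x.
Proof. move=> hn hF x. apply/eqP; rewrite eq_sym -subr_eq0 opprK. by rewrite (addxx hn hF). Qed.

Lemma frobD (F : finFieldType) n : (0 < n)%N -> #|F| = (2 ^ n)%N ->
  forall i (x y : F), (x + y) ^+ (2 ^ i) = x ^+ (2 ^ i) + y ^+ (2 ^ i).
Proof.
move=> hn hF; elim=> [|i IH] x y; first by rewrite !expr1.
rewrite expnSr !exprM IH.
have -> : forall u v : F, (u + v) ^+ 2 = u ^+ 2 + v ^+ 2 + 2 * (u * v) by move=> u v; ring.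
by rewrite (char2 hn hF) mul0r addr0.
Qed.

Lemma trace_add (F : finFieldType) n : (0 < n)%N -> #|F| = (2 ^ n)%N ->
  forall m (x y : F), trace m (x + y) = trace m x + trace m y.
Proof.
move=> hn hF m x y; rewrite /trace -big_split /=.
by apply: eq_bigr => i _; rewrite (frobD hn hF).
Qed.

Lemma trace_sq (F : finFieldType) n : (0 < n)%N -> #|F| = (2 ^ n)%N ->
  forall x : F, trace n x ^+ 2 = trace n x.
Proof.
move=> hn hF x; rewrite /trace.
have sq : forall (m : nat), (\sum_(i < m) x ^+ (2 ^ i)) ^+ 2 = \sum_(i < m) x ^+ (2 ^ i.+1).
  elim=> [|m IH]; first by rewrite !big_ord0 expr0n.
  rewrite !big_ord_recr /=.
  have -> : forall u v : F, (u + v) ^+ 2 = u ^+ 2 + v ^+ 2 + 2 * (u * v) by move=> u v; ring.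
  by rewrite (char2 hn hF) mul0r addr0 IH -exprM expnSr.
rewrite sq -(prednK hn) big_ord_recr big_ord_recl /= -(prednK hn) /=.
rewrite (prednK hn) -hF expf_card expn0 expr1 addrC; congr (_ + _).
Qed.


Lemma trace01 (F : finFieldType) n : (0 < n)%N -> #|F| = (2 ^ n)%N ->
  forall x : F, trace n x = 0 \/ trace n x = 1.
Proof.
move=> hn hF x; have h := trace_sq hn hF x.
have : trace n x * (trace n x - 1) = 0 by rewrite mulrBr mulr1 -expr2 h subrr.
move/eqP; rewrite mulf_eq0 subr_eq0 => /orP[]/eqP; tauto.
Qed.

Lemma trbD (F : finFieldType) n : (0 < n)%N -> #|F| = (2 ^ n)%N ->
  forall x y : F, trb n (x + y) = trb n x (+) trb n y.
Proof.
move=> hn hF x y; rewrite /trb (trace_add hn hF).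
have h2 := addxx hn hF 1.
case: (trace01 hn hF x) => ->; case: (trace01 hn hF y) => ->;
  rewrite ?addr0 ?add0r ?h2 ?eqxx ?oner_eq0 //.
Qed.

Lemma trb0 (F : finFieldType) n : trb n (0 : F) = false.
Proof. by rewrite /trb /trace big1 ?eqxx // => i _; rewrite expr0n expn_eq0. Qed.

Lemma size_trpoly (F : finFieldType) n :
  size (\sum_(i < n.+1) 'X^(2 ^ i) : {poly F}) = (2 ^ n).+1.
Proof.
elim: n => [|n IH]; first by rewrite big_ord1 expn0 size_polyX.
rewrite big_ord_recr /= addrC size_polyDl ?size_polyXn // IH ?ltnS expnS.
have := expn_gt0 2 n; lia.
Qed.

Lemma trace_ne0 (F : finFieldType) n : (0 < n)%N -> #|F| = (2 ^ n)%N ->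
  exists t : F, trb n t.
Proof.
move=> hn hF; apply/existsP; apply: contraT; rewrite negb_exists => /forallP H.
pose P : {poly F} := \sum_(i < n) 'X^(2 ^ i).
have sP : size P = (2 ^ n.-1).+1 by rewrite /P -(prednK hn) size_trpoly.
have P0 : P != 0 by rewrite -size_poly_eq0 sP.
have Hall : all (root P) (enum F).
  apply/allP => x _; rewrite /root /P horner_sum.
  have -> : \sum_(i < n) ('X^(2 ^ i)).[x] = trace n x.
    by apply: eq_bigr => i _; rewrite hornerXn.
  by have := H x; rewrite /trb negbK.
have := max_poly_roots P0 Hall (enum_uniq F).
rewrite sP -cardE hF -(prednK hn) expnS ltnS.
rewrite /=; have := expn_gt0 2 n.-1; lia.
Qed.


Lemma frob_iter (F : fieldType) a (w : F) : w ^+ (2 ^ a) = w -> forall j, w ^+ (2 ^ (a * j)) = w.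
Proof.
move=> h; elim=> [|j IH]; first by rewrite muln0 expn0 expr1.
by rewrite mulnS expnD exprM h IH.
Qed.

Lemma frob_gcd (F : fieldType) a b (w : F) : (0 < a)%N ->
  w ^+ (2 ^ a) = w -> w ^+ (2 ^ b) = w -> w ^+ (2 ^ gcdn a b) = w.
Proof.
move=> ha h1 h2; case: (egcdnP b ha) => km kn E _.
have := frob_iter h1 km; rewrite mulnC E expnD exprM.
by rewrite mulnC frob_iter.
Qed.

Lemma w_fix (F : finFieldType) m k (w : F) : (0 < k)%N -> coprime k m -> #|F| = (2 ^ m)%N ->
  w ^+ (2 ^ k) = w -> w = 0 \/ w = 1.
Proof.
move=> hk hc hF h.
have h2 : w ^+ (2 ^ m) = w by rewrite -hF expf_card.
have := frob_gcd hk h h2; rewrite (eqP hc) expn1 => e.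
have : w * (w - 1) = 0 by rewrite mulrBr mulr1 -expr2 e subrr.
move/eqP; rewrite mulf_eq0 subr_eq0 => /orP[]/eqP; tauto.
Qed.

Lemma pow_inj (F : finFieldType) m k : (0 < m)%N -> (0 < k)%N -> coprime k m -> odd m ->
  #|F| = (2 ^ m)%N -> injective (fun x : F => x ^+ (2 ^ k + 1)).
Proof.
move=> hm hk hc ho hF x y /= e.
have [y0|y0] := eqVneq y 0.
  subst y; move: e; rewrite expr0n addn1 /= => /eqP; rewrite expf_eq0 => /andP[_ /eqP] //.
pose w := x / y.
have w1 : w ^+ (2 ^ k + 1) = 1 by rewrite /w expr_div_n e divff // expf_neq0.
have w0 : w != 0.
  by apply/eqP => w0; move: w1; rewrite w0 expr0n addn1 /= => /eqP; rewrite eq_sym oner_eq0.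
have wq : w ^+ (2 ^ k) = w^-1.
  by apply: (mulIf w0); rewrite mulVf // -exprSr -addn1.
have wqq : w ^+ (2 ^ (k * 2)) = w.
  by rewrite expnM expnS expn1 exprM wq exprVn wq invrK.
have cop : coprime (k * 2) m by rewrite coprimeMl hc coprime2n.
have k2 : (0 < k * 2)%N by rewrite muln_gt0 hk.
have [w00|] := w_fix k2 cop hF wqq.
  by move/eqP: w0.
by move=> /(congr1 (fun t => t * y)); rewrite mul1r /w divfK.
Qed.


Lemma eqq (F : finFieldType) m k (u v : F) : (0 < k)%N -> coprime k m -> #|F| = (2 ^ m)%N ->
  u ^+ (2 ^ k) * v = u * v ^+ (2 ^ k) -> u = 0 \/ v = 0 \/ u = v.
Proof.
move=> hk hc hF e.
have [u0|u0] := eqVneq u 0; first by left.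
have [v0|v0] := eqVneq v 0; first by right; left.
right; right.
have : (u / v) ^+ (2 ^ k) = u / v.
  rewrite expr_div_n; apply: (mulIf (expf_neq0 (2 ^ k) v0)); rewrite divfK ?expf_neq0 //.
  by apply: (mulIf v0); rewrite e -mulrA [_ * v]mulrC mulrA divfK.
move=> /(w_fix hk hc hF) [].
  by move/eqP; rewrite mulf_eq0 invr_eq0 (negbTE u0) (negbTE v0).
by move=> /(congr1 (fun t => t * v)); rewrite mul1r divfK.
Qed.

Lemma nondeg (F : finFieldType) m (c : F) : (0 < m)%N -> #|F| = (2 ^ m)%N ->
  (forall x, trb m (x * c) = false) -> c = 0.
Proof.
move=> hm hF H; apply/eqP; apply: contraT => c0.
have [t ht] := trace_ne0 hm hF.
by have := H (t / c); rewrite divfK // ht.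
Qed.

Lemma sgnbX (a b : bool) : sgnb (a (+) b) = sgnb a * sgnb b.
Proof. by case: a; case: b; rewrite /sgnb /= ?expr0 ?expr1 ?mulr1 ?mul1r ?mulrNN ?mulr1. Qed.

Lemma charsum (F : finFieldType) m (c : F) : (0 < m)%N -> #|F| = (2 ^ m)%N ->
  \sum_(x : F) sgnb (trb m (x * c)) = if c == 0 then (2 ^ m)%:Z else 0.
Proof.
move=> hm hF; have [->|c0] := eqVneq c 0.
  under eq_bigr => x _ do rewrite mulr0 trb0.
  by rewrite sumr_const hF /sgnb expr0 -[X in _ = X]natz pmulrn.
have [t ht] := trace_ne0 hm hF.
set S := \sum_(x : F) _.
have : S = - S.
  rewrite {1}/S (reindex_inj (addrI (t / c))) /=.
  rewrite -sumrN; apply: eq_bigr => x _.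
  by rewrite mulrDl divfK // (trbD hm hF) ht sgnbX /sgnb expr1 mulN1r.
move/eqP; rewrite -subr_eq0 opprK -mulr2n -mulr_natr mulf_eq0 => /orP[/eqP //|].
by [].
Qed.


Lemma sgnb_sq b : sgnb b ^+ 2 = 1.
Proof. by case: b; rewrite /sgnb ?expr0 ?expr1 ?sqrrN expr1n. Qed.

Lemma mm_sum (F : finFieldType) m (pi : F -> F) (a1 a2 : F) :
  (0 < m)%N -> #|F| = (2 ^ m)%N -> bijective pi ->
  (\sum_(x2 : F) \sum_(x1 : F)
     sgnb (trb m (x1 * pi x2) (+) trb m (a1 * x1) (+) trb m (a2 * x2))) ^+ 2
  = (2 ^ (2 * m))%:Z.
Proof.
move=> hm hF [pinv pK Kp].
have E : forall x2, \sum_(x1 : F)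
     sgnb (trb m (x1 * pi x2) (+) trb m (a1 * x1) (+) trb m (a2 * x2))
   = if x2 == pinv a1 then sgnb (trb m (a2 * x2)) * (2 ^ m)%:Z else 0.
  move=> x2.
  under eq_bigr => x1 _ do rewrite -(trbD hm hF) [a1 * x1]mulrC -mulrDr sgnbX.
  rewrite -mulr_suml charsum // addr_eq0 (oppc2 hm hF).
  have -> : (pi x2 == a1) = (x2 == pinv a1).
    apply/eqP/eqP => [<-|->]; by rewrite ?pK ?Kp.
  by case: ifP; rewrite ?mul0r // mulrC.
under eq_bigr => x2 _ do rewrite E.
rewrite -big_mkcond big_pred1_eq exprMn sgnb_sq mul1r.
by rewrite expr2 -PoszM -expnD addnn -mul2n.
Qed.

Lemma bent_fz (F K : finFieldType) m k (z : K) :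
  (0 < m)%N -> (0 < k)%N -> coprime k m -> odd m -> #|F| = (2 ^ m)%N ->
  bent2 m (fz m k z : F * F -> bool).
Proof.
move=> hm hk hc ho hF [a1 a2]; rewrite /walsh2 /fz /=.
have hpi : bijective (fun x : F => x ^+ (2 ^ k + 1)) := injF_bij (pow_inj hm hk hc ho hF).
rewrite -(pair_bigA _ (fun x1 x2 => sgnb ((if trb k z then trb m (x2 * x1 ^+ (2 ^ k + 1))
     else trb m (x1 * x2 ^+ (2 ^ k + 1))) (+) trb m (a1 * x1) (+) trb m (a2 * x2)))) /=.
case: (trb k z).
  have := mm_sum a2 a1 hm hF hpi.
  congr (_ ^+ 2 = _); apply: eq_bigr => x1 _; apply: eq_bigr => x2 _.
  by rewrite addbAC.
rewrite exchange_big /=.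
exact: (mm_sum a1 a2 hm hF hpi).
Qed.


Lemma core (F : finFieldType) m k (s1 s2 u v : F) :
  (0 < m)%N -> (0 < k)%N -> coprime k m -> #|F| = (2 ^ m)%N ->
  (forall x, trb m ((x + s1) * u ^+ (2 ^ k + 1)) (+) trb m ((x + s2) * v ^+ (2 ^ k + 1))
     (+) trb m ((x + s1 + s2) * (u + v) ^+ (2 ^ k + 1)) = false) ->
  u = 0 \/ v = 0 \/ u = v.
Proof.
move=> hm hk hc hF.
set al := u ^+ _; set be := v ^+ _; set ga := (u + v) ^+ _ => H.
pose S x := (x + s1) * al + (x + s2) * be + (x + s1 + s2) * ga.
have HS : forall x, trb m (S x) = false by move=> x; rewrite /S !(trbD hm hF) H.
have HS2 : forall x, S x = x * (al + be + ga) + S 0 by move=> x; rewrite /S; ring.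
have c0 : al + be + ga = 0.
  apply: (nondeg hm hF) => x.
  have := HS x; rewrite HS2 (trbD hm hF) HS.
  by case: (trb m _).
move: c0; rewrite /al /be /ga !exprD !expr1 (frobD hm hF).
set uq := u ^+ _; set vq := v ^+ _ => e.
have e2 : uq * v + vq * u = 0.
  rewrite -e.
  have -> : uq * u + vq * v + (uq + vq) * (u + v) = 2 * (uq * u) + 2 * (vq * v) + (uq * v + vq * u) by ring.
  by rewrite (char2 hm hF) !mul0r !add0r.
apply: (eqq hk hc hF).
move/eqP: e2; rewrite addr_eq0 (oppc2 hm hF) => /eqP ->.
by rewrite mulrC.
Qed.

Lemma pairD (A B : zmodType) (a c : A) (b d : B) : (a, b) + (c, d) = (a + c, b + d).
Proof. by []. Qed.

Lemma sd (F K : finFieldType) m k (a1 a2 b1 b2 : F) (ya yb : K) :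
  (0 < m)%N -> (0 < k)%N -> coprime k m -> #|F| = (2 ^ m)%N -> #|K| = (2 ^ k)%N ->
  (forall w, fcor m k w (+) fcor m k (w + ((a1, a2), ya, 0)) (+) fcor m k (w + ((b1, b2), yb, 0))
     (+) fcor m k (w + ((a1, a2), ya, 0) + ((b1, b2), yb, 0)) = false) ->
  (a2 = 0 \/ b2 = 0 \/ a2 = b2) /\ (a1 = 0 \/ b1 = 0 \/ a1 = b1).
Proof.
move=> hm hk hc hF hK H; split.
  apply: (core (s1 := a1) (s2 := b1) hm hk hc hF) => x.
  have := H ((x, 0), 0, 0); rewrite !pairD /fcor /fz /= ?add0r ?addr0 ?mulr0 ?trb0 /=.
  by rewrite expr0n addn1 /= mulr0 trb0 !addbF addFb.
apply: (core (s1 := a2) (s2 := b2) hm hk hc hF) => x.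
have [t ht] := trace_ne0 (F := K) hk hK.
have := H ((0, x), 0, t); rewrite !pairD /fcor /fz /= ?add0r ?addr0 ?mul0r ?trb0 /= ht.

rewrite [(ya + yb) * t]mulrDl (trbD hk hK) expr0n addn1 /= mulr0 trb0 addFb.
move: (trb m ((x + a2) * _)) (trb m ((x + b2) * _)) (trb m ((x + a2 + b2) * _))
  (trb k (ya * t)) (trb k (yb * t)) => p q r s u.
by case: p; case: q; case: r; case: s; case: u.
Qed.


Lemma xorE (p q r : bool) : p = q (+) r -> q = p (+) r.
Proof. by case: p; case: q; case: r. Qed.

Lemma mm_phi (V : zmodType) (E : finFieldType) N (h : V -> bool) :
  (0 < N)%N -> #|E| = (2 ^ N)%N -> MMsharp E N h ->
  exists Phi : E -> V, [/\ additive_map Phi, injective Phi &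
   forall w e1 e2, h w (+) h (w + Phi e1) (+) h (w + Phi e2) (+) h (w + Phi e1 + Phi e2) = false].
Proof.
move=> hN hE [psi [L [a [c [b [pi [g [[psiA [psiinv psiK psiKi]]] [LA [Linv LK LKi]] _ H]]]]]]].
have pD : forall e1 e2 : E, ((e1 + e2, 0) : E * E) = (e1, 0) + (e2, 0) by move=> e1 e2; rewrite pairD addr0.
exists (fun e => psi (L (e, 0))); split.
- by move=> e1 e2; rewrite pD LA psiA.
- by move=> e1 e2 /= /(can_inj psiK) /(can_inj LK) /(congr1 fst).
have Hx : forall u, h (psi (L u + a)) = MMfun N pi g u (+) (trb N (c.1 * u.1) (+) trb N (c.2 * u.2) (+) b).
  by move=> u; apply: xorE; rewrite addbA; apply: H.
have sh : forall u e, psi (L u + a) + psi (L (e, 0)) = psi (L (u + (e, 0)) + a).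
  by move=> u e; rewrite -psiA LA addrAC.
have Hu : forall u e1 e2, h (psi (L u + a)) (+) h (psi (L (u + (e1, 0)) + a))
   (+) h (psi (L (u + (e2, 0)) + a)) (+) h (psi (L (u + (e1, 0) + (e2, 0)) + a)) = false.
  move=> [u1 u2] e1 e2; rewrite !Hx !pairD /MMfun /= !addr0.
  rewrite !mulrDl !mulrDr !(trbD hN hE).
  move: (trb N (u1 * _)) (trb N (e1 * _)) (trb N (e2 * _)) (g u2) (trb N (c.1 * u1))
    (trb N (c.1 * e1)) (trb N (c.1 * e2)) (trb N (c.2 * u2)) => p1 p2 p3 p4 p5 p6 p7 p8.
  by case: p1; case: p2; case: p3; case: p4; case: p5; case: p6; case: p7; case: p8; case: (b).
move=> w e1 e2.
have Pw : psi (L (Linv (psiinv w - a)) + a) = w by rewrite LKi subrK psiKi.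
by rewrite -Pw !sh Hu.
Qed.


Lemma addmap_sub (U V : zmodType) (phi : U -> V) : additive_map phi ->
  forall u v, phi (u - v) = phi u - phi v.
Proof. by move=> H u v; apply: (addIr (phi v)); rewrite subrK -H subrK. Qed.

Lemma card_le2 (F : finFieldType) (S : {set F}) :
  (forall u v, u \in S -> v \in S -> u = 0 \/ v = 0 \/ u = v) -> (#|S| <= 2)%N.
Proof.
move=> H; case: (pickP [pred x in S | x != 0]) => [c /andP[cS c0] | none].
  have sub : S \subset [set 0; c].
    apply/subsetP => x xS; rewrite !inE.
    case: (H x c xS cS) => [->|[c00|->]]; rewrite ?eqxx ?orbT //.
    by rewrite c00 eqxx in c0.
  by apply: (leq_trans (subset_leq_card sub)); rewrite cards2; case: (_ != _).
have sub : S \subset [set 0].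
  apply/subsetP => x xS; rewrite !inE.
  by have := none x; rewrite /= xS /= => /negbFE.
by apply: (leq_trans (subset_leq_card sub)); rewrite cards1.
Qed.

Lemma pext (F K : zmodType) (p q : F * F * K * K) :
  p.1.1 = q.1.1 -> p.1.2 = q.1.2 -> p.2 = q.2 -> p = q.
Proof. by case: p => [[? ?] ?]; case: q => [[? ?] ?] /= -> -> ->. Qed.

Lemma not_mm (F K E : finFieldType) m k :
  (0 < m)%N -> (0 < k)%N -> coprime k m -> (k + 2 < m)%N ->
  #|F| = (2 ^ m)%N -> #|K| = (2 ^ k)%N -> #|E| = (2 ^ (m + k))%N ->
  ~ MMsharp E (m + k) (fcor m k : (F * F) * K * K -> bool).
Proof.
move=> hm hk hc hmk hF hK hE HM.
have hN : (0 < m + k)%N by rewrite addn_gt0 hm.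
have [Phi [PA Pinj Pd]] := mm_phi hN hE HM.
pose zc e := (Phi e).2; pose yc e := (Phi e).1.2; pose xc e := (Phi e).1.1.
have zcB : forall e f, zc (e - f) = zc e - zc f by move=> e f; rewrite /zc (addmap_sub PA).
pose E0 := [set e | zc e == 0].
have prop : forall e1 e2, e1 \in E0 -> e2 \in E0 ->
    ((xc e1).2 = 0 \/ (xc e2).2 = 0 \/ (xc e1).2 = (xc e2).2) /\
    ((xc e1).1 = 0 \/ (xc e2).1 = 0 \/ (xc e1).1 = (xc e2).1).
  move=> e1 e2; rewrite !inE => /eqP z1 /eqP z2.
  have eP : forall e, zc e = 0 -> Phi e = ((xc e).1, (xc e).2, yc e, 0).
    move=> e; rewrite /zc /xc /yc; case: (Phi e) => [[[? ?] ?] ?] /= -> //.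
  apply: (sd (ya := yc e1) (yb := yc e2) hm hk hc hF hK) => w.
  by have := Pd w e1 e2; rewrite (eP _ z1) (eP _ z2).
pose T1 := [set (xc e).1 | e in E0]; pose T2 := [set (xc e).2 | e in E0].
have c1 : (#|T1| <= 2)%N.
  apply: card_le2 => u v /imsetP[e1 h1 ->] /imsetP[e2 h2 ->]; exact: (prop _ _ h1 h2).2.
have c2 : (#|T2| <= 2)%N.
  apply: card_le2 => u v /imsetP[e1 h1 ->] /imsetP[e2 h2 ->]; exact: (prop _ _ h1 h2).1.
pose r t := odflt 0 [pick e | zc e == t].
have rP : forall e, zc (r (zc e)) = zc e.
  move=> e; rewrite /r; case: pickP => [e' /eqP //|/(_ e)]; by rewrite eqxx.
pose mu e := (zc e, (yc (e - r (zc e)), xc (e - r (zc e)))).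
have muI : injective mu.
  move=> e f [ez ey ex]; apply: (addIr (- r (zc e))); apply: Pinj.
  apply: pext.
  - by move: ex; rewrite -ez.
  - by move: ey; rewrite -ez.
  - change (zc (e - r (zc e)) = zc (f - r (zc e))); by rewrite !zcB rP ez.
have sub : mu @: [set: E] \subset setX [set: K] (setX [set: K] (setX T1 T2)).
  apply/subsetP => _ /imsetP[e _ ->]; rewrite !inE /=.
  have h0 : e - r (zc e) \in E0 by rewrite inE zcB rP subrr.
  by apply/andP; split; apply/imsetP; exists (e - r (zc e)).
have := subset_leq_card sub; rewrite card_imset // cardsT hE !cardsX !cardsT hK.
have c12 : (#|T1| * #|T2| <= 2 ^ 2)%N by rewrite expnS expn1 leq_mul.
move=> /leq_trans /(_ (leq_mul (leqnn (2 ^ k)) (leq_mul (leqnn (2 ^ k)) c12))).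
rewrite -!expnD leq_exp2l //; lia.
Qed.

Local Close Scope ring_scope.
Unset Implicit Arguments.

Theorem corollary3p12 (m k : nat) (F K E : finFieldType)
  (hm : (0 < m)%N) (hk : (0 < k)%N) (hcop : coprime k m) (hodd : odd m)
  (hmk : (k + 2 < m)%N)
  (hF : #|F| = 2 ^ m) (hK : #|K| = 2 ^ k) (hE : #|E| = 2 ^ (m + k)) :
  isGMM m k (fcor m k : (F * F) * K * K -> bool) /\
  ~ MMsharp E (m + k) (fcor m k : (F * F) * K * K -> bool).
Proof.
split; last exact: not_mm.
exists (fun z => fz m k z); split; last by [].
by move=> z; apply: bent_fz.
Qed.
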